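(* Let $h:[\ell,r]\to\mathbb{R}$ be a continuous concave function and $m\in\mathbb{R}$. If $\{x\in[\ell,r): h'_+(x)\leq m\}$ is non-empty, then $x_1=\inf\{x\in[\ell,r): h'_+(x)\leq m\}$ belongs to $\mathrm{xExt}(h)$ and $h'_+(x_1)\leq m$. Similarly, if $\{x\in(\ell,r]: h'_-(x)\geq m\}$ is non-empty, then $x_2=\sup\{x\in(\ell,r]: h'_-(x)\geq m\}$ belongs to $\mathrm{xExt}(h)$ and $h'_-(x_2)\geq m$.
   Context: $h'_\pm(x)=\lim_{y\to x^\pm}\frac{h(y)-h(x)}{y-x}$; $h'_+$ is defined on $[\ell,r)$ with values in $\mathbb{R}\cup\{\infty\}$ and $h'_-$ on $(\ell,r]$ with values in $\mathbb{R}\cup\{-\infty\}$. $\mathrm{xExt}(h)=\{\ell,r\}\cup\{x\in(\ell,r): h|_{[x-\delta,x+\delta]}\text{ is not linear for any }\delta>0\}$. *)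

(* Defs.v *)
From HB Require Import structures.
From mathcomp Require Import all_boot all_order all_algebra.
From mathcomp Require Import all_classical all_reals all_analysis.
Set Implicit Arguments. Unset Strict Implicit. Unset Printing Implicit Defensive.
Import Order.TTheory GRing.Theory Num.Theory.
Import numFieldNormedType.Exports.
Local Open Scope classical_set_scope.
Local Open Scope ring_scope.

Definition concave_on (R : realType) (l r : R) (h : R -> R) : Prop :=
  forall x y t : R, l <= x <= r -> l <= y <= r -> 0 <= t <= 1 ->
    (1 - t) * h x + t * h y <= h ((1 - t) * x + t * y).

Definition rderiv (R : realType) (h : R -> R) (x : R) : \bar R :=
  lim ((fun y : R => ((h y - h x) / (y - x))%:E) @ x^'+).

Definition lderiv (R : realType) (h : R -> R) (x : R) : \bar R :=
  lim ((fun y : R => ((h y - h x) / (y - x))%:E) @ x^'-).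

Definition affine_on (R : realType) (a b : R) (h : R -> R) : Prop :=
  exists c d : R, forall y, a <= y <= b -> h y = c * y + d.

Definition xExt (R : realType) (l r : R) (h : R -> R) : set R :=
  [set x | x = l \/ x = r \/
     (l < x < r /\ forall delta : R, 0 < delta ->
        l <= x - delta -> x + delta <= r -> ~ affine_on (x - delta) (x + delta) h)].

(* Main.v *)
Require Import Defs.
From HB Require Import structures.
From mathcomp Require Import all_boot all_order all_algebra.
From mathcomp Require Import all_classical all_reals all_analysis.
From mathcomp Require Import ring lra.
Import Order.TTheory GRing.Theory Num.Theory.
Import numFieldNormedType.Exports.
Local Open Scope classical_set_scope.
Local Open Scope ring_scope.
Set Implicit Arguments. Unset Strict Implicit.

Section S.
Variables (R : realType) (l r : R) (h : R -> R).
Hypothesis hc : concave_on l r h.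

Lemma conc3 a b c : l <= a -> a < b -> b < c -> c <= r ->
  (c - b) * h a + (b - a) * h c <= (c - a) * h b.
Proof.
move=> la ab bc cr.
have ca : 0 < c - a by lra.
have := @hc a c ((b-a)/(c-a)).
have -> : (1 - (b - a) / (c - a)) = (c - b)/(c-a).
  by field; lra.
have -> : (c - b) / (c - a) * a + (b - a) / (c - a) * c = b.
  by field; lra.
move=> H.
have {}H : (c - b) / (c - a) * h a + (b - a) / (c - a) * h c <= h b.
  apply: H; [lra|lra|].
  apply/andP; split; first by apply: divr_ge0; lra.
  by rewrite ler_pdivrMr //; lra.
rewrite -(ler_pM2l ca) in H.
have E : (c - a) * ((c - b) / (c - a) * h a + (b - a) / (c - a) * h c) =
  (c - b) * h a + (b - a) * h c by field; lra.
by rewrite E in H.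
Qed.

Definition sl x y := (h y - h x) / (y - x).

Lemma sl12 a b c : l <= a -> a < b -> b < c -> c <= r -> sl a c <= sl a b.
Proof.
move=> la ab bc cr; have := @conc3 a b c la ab bc cr; rewrite /sl.
have ac : a < c by lra.
rewrite ler_pdivrMr ?subr_gt0 // mulrAC ler_pdivlMr ?subr_gt0 //; nra.
Qed.

Lemma sl23 a b c : l <= a -> a < b -> b < c -> c <= r -> sl b c <= sl a c.
Proof.
move=> la ab bc cr; have := @conc3 a b c la ab bc cr; rewrite /sl.
have ac : a < c by lra.
rewrite ler_pdivrMr ?subr_gt0 // mulrAC ler_pdivlMr ?subr_gt0 //; nra.
Qed.

Lemma rd_cvg x : l <= x -> x < r -> cvg ((fun y => (sl x y)%:E) @ x^'+).
Proof.
move=> lx xr; apply: nonincreasing_at_right_is_cvge.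
near=> b => y z; rewrite !in_itv /= => /andP[xy yb] /andP[xz zb] yz.
rewrite lee_fin; move: yz; rewrite le_eqVlt => /orP[/eqP->//|yz].
apply: sl12 => //; apply: le_trans (ltW zb) _.
near: b; exact: nbhs_right_le.
Unshelve. all: by end_near. Qed.

Lemma rd_ge x z : l <= x -> x < z -> z <= r -> ((sl x z)%:E <= rderiv h x)%E.
Proof.
move=> lx xz zr; apply: lime_ge; first exact: rd_cvg (lt_le_trans xz zr).
near=> y; rewrite lee_fin.
have yz : y <= z by near: y; exact: nbhs_right_le.
move: yz; rewrite le_eqVlt => /orP[/eqP->//|yz].
apply: sl12 => //; near: y; exact: nbhs_right_gt.
Unshelve. all: by end_near. Qed.

Lemma rd_le x M : l <= x -> x < r -> (\forall y \near x^'+, sl x y <= M) ->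
  (rderiv h x <= M%:E)%E.
Proof.
move=> lx xr H; apply: lime_le; first exact: rd_cvg.
by apply: filterS H => y; rewrite lee_fin.
Qed.
End S.

Lemma rd_aff (R : realType) (h : R -> R) x c d a b : a <= x -> x < b ->
  (forall y, a <= y <= b -> h y = c * y + d) -> rderiv h x = c%:E.
Proof.
move=> ax xb H; rewrite /rderiv; apply: cvg_lim => //; apply: cvg_near_cst.
near=> y.
have xy : x < y by near: y; exact: nbhs_right_gt.
have yb : y <= b by near: y; exact: nbhs_right_le.
rewrite !H ?ax ?(ltW xb) ?yb ?(le_trans ax (ltW xy)) //.
congr (_%:E); field; lra.
Unshelve. all: by end_near. Qed.


Lemma part1 (R : realType) (l r : R) (h : R -> R) (m : R) :
  (forall x, l <= x -> x < r -> h @ x^'+ --> h x) ->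
  concave_on l r h ->
  let S1 := [set x : R | l <= x < r /\ (rderiv h x <= m%:E)%E] in
  S1 !=set0 -> xExt l r h (inf S1) /\ (rderiv h (inf S1) <= m%:E)%E.
Proof.
move=> hcont hc S1 [y0 Sy0].
have lbS : lbound S1 l by move=> y [/andP[]].
have hl : has_lbound S1 by exists l.
have ne : S1 !=set0 by exists y0.
have lx1 : l <= inf S1 := lb_le_inf ne lbS.
have x1y : forall y, S1 y -> inf S1 <= y := ge_inf hl.
have x1r : inf S1 < r.
  by case: (Sy0) => /andP[_ y0r] _; exact: le_lt_trans (x1y _ Sy0) y0r.
set x1 := inf S1 in lx1 x1y x1r *.
have C : (rderiv h x1 <= m%:E)%E.
  case: (pselect (S1 x1)) => [[_ ]//|nS].
  apply: (rd_le hc lx1 x1r).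
  near=> z.
  have x1z : x1 < z by near: z; exact: nbhs_right_gt.
  have zr : z <= r by near: z; exact: nbhs_right_le.
  rewrite leNgt; apply/negP => mz.
  have mz' : m * (z - x1) < h z - h x1.
    by rewrite -ltr_pdivlMr ?subr_gt0.
  have L : (fun y => h z - h y - m * (z - y)) @ x1^'+ --> (h z - h x1 - m * (z - x1)).
    apply: cvgB; first by apply: cvgB; [exact: cvg_cst | exact: hcont].
    apply: cvgMr; apply: cvgB; first exact: cvg_cst.
    by apply: cvg_at_right_filter; exact: cvg_id.
  have P1 : \forall y \near x1^'+, 0 < h z - h y - m * (z - y).
    by apply: (@cvgr_gt _ _ _ _ _ _ L); lra.
  have P2 : \forall y \near x1^'+, y < z by exact: nbhs_right_lt.
  have P3 : \forall y \near x1^'+, 0 < h z - h y - m * (z - y) /\ y < z.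
    by near=> y; split; near: y.
  move: P3; rewrite /at_right /within /= => /nbhs_ballP[e /= e0 He].
  have hi : has_inf S1 by split.
  have [y Sy ye] := inf_adherent e0 hi.
  have x1y' : x1 < y.
    rewrite lt_neqAle x1y // andbT; apply/eqP => E; apply: nS; by rewrite E.
  have [P1y P2y] : 0 < h z - h y - m * (z - y) /\ y < z.
    apply: He => //; rewrite /ball /= distrC ger0_norm ?subr_ge0 ?(ltW x1y') //; lra.
  case: (Sy) => /andP[ly yr] Hy.
  have := rd_ge hc ly P2y zr.
  move=> /le_trans /(_ Hy); rewrite lee_fin leNgt => /negP; apply.
  by rewrite ltr_pdivlMr ?subr_gt0 //; lra.
split=> //.
case: (eqVneq x1 l) => [->|x1l]; first by left.
right; right; split.
  by apply/andP; split => //; rewrite lt_neqAle eq_sym x1l.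
move=> δ δ0 lδ δr [c [d Hcd]].
have E1 : rderiv h x1 = c%:E.
  by apply: (rd_aff (a := x1 - δ) (b := x1 + δ) (d := d)) => //; lra.
have E2 : rderiv h (x1 - δ / 2) = c%:E.
  by apply: (rd_aff (a := x1 - δ) (b := x1 + δ) (d := d)) => //; lra.
have Sp : S1 (x1 - δ / 2).
  split; first by apply/andP; split; lra.
  by rewrite E2 -E1.
have := x1y _ Sp; lra.
Unshelve. all: by end_near. Qed.

Lemma concN (R : realType) (l r : R) (h : R -> R) :
  concave_on l r h -> concave_on (- r) (- l) (fun u => h (- u)).
Proof.
move=> hc x y t /andP[x1 x2] /andP[y1 y2] t01.
have -> : - ((1 - t) * x + t * y) = (1 - t) * (- x) + t * (- y) by ring.
by apply: hc => //; apply/andP; split; lra.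
Qed.

Lemma ld_rd (R : realType) (l r : R) (h : R -> R) x :
  concave_on l r h -> l < x -> x <= r ->
  lderiv h x = (- rderiv (fun u => h (- u)%R) (- x)%R)%E.
Proof.
move=> hc lx xr.
have gc := concN hc.
have cv := rd_cvg gc (x := - x) (ltac:(lra)) (ltac:(lra)).
rewrite /lderiv; apply: cvg_lim => //.
apply/cvg_at_leftNP.
have -> : ((fun y => ((h y - h x) / (y - x))%:E) \o -%R) =
   (fun w => - (sl (fun u => h (- u)%R) (- x)%R w)%:E)%E.
  apply/funext => w /=; rewrite /sl opprK; congr (_%:E).
  by rewrite -opprD invrN mulrN.
exact: cvgeN.
Qed.

Lemma part2 (R : realType) (l r : R) (h : R -> R) (m : R) :
  (forall x, l < x -> x <= r -> h @ x^'- --> h x) ->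
  concave_on l r h ->
  let S2 := [set x : R | l < x <= r /\ (m%:E <= lderiv h x)%E] in
  S2 !=set0 -> xExt l r h (sup S2) /\ (m%:E <= lderiv h (sup S2))%E.
Proof.
move=> hcont hc S2 [x0 Sx0].
pose g := fun u : R => h (- u).
have gc : concave_on (- r) (- l) g := concN hc.
have gcont : forall u, - r <= u -> u < - l -> g @ u^'+ --> g u.
  move=> u u1 u2; apply/cvg_at_rightNP.
  have -> : g \o -%R = h by apply/funext => y /=; rewrite /g opprK.
  by rewrite /g; apply: hcont; lra.
pose S1 := [set x : R | - r <= x < - l /\ (rderiv g x <= (- m)%:E)%E].
have E : -%R @` S2 = S1.
  apply/seteqP; split => u.
    move=> [x [/andP[lx xr] Hx] <-]; split; first by apply/andP; split; lra.
    by move: Hx; rewrite (ld_rd hc lx xr) leeNr -EFinN.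
  move=> [/andP[u1 u2] Hu]; exists (- u); last by rewrite opprK.
  have lx : l < - u by lra.
  have xr : - u <= r by lra.
  split; first by rewrite lx xr.
  by rewrite (ld_rd hc lx xr) opprK leeNr -EFinN.
have ne1 : S1 !=set0 by rewrite -E; exists (- x0), x0.
have [X1 X2] := part1 gcont gc ne1.
have Es : inf S1 = - sup S2 by rewrite /inf -E setNK.
rewrite Es in X1 X2.
have ubS : ubound S2 r by move=> y [/andP[]].
have hs : has_sup S2 by split; [exists x0 | exists r].
have ls : l < sup S2.
  by case: (Sx0) => /andP[lx0 _] _; exact: lt_le_trans lx0 (sup_upper_bound hs Sx0).
have sr : sup S2 <= r by apply: ge_sup => //; exists x0.
split; last by rewrite (ld_rd hc ls sr) leeNr.
case: X1 => [H|[H|[H1 H2]]].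
- by right; left; lra.
- by left; lra.
right; right; split; first by apply/andP; split; lra.
move=> δ δ0 lδ δr [c [d Hcd]].
apply: (H2 δ δ0); [lra|lra|].
exists (- c), d => y /andP[y1 y2]; rewrite /g Hcd; first by ring.
by apply/andP; split; lra.
Qed.

Unset Implicit Arguments.
Theorem mainTheorem18 (R : realType) (l r : R) (h : R -> R) (m : R) :
  {within `[l, r], continuous h} ->
  concave_on l r h ->
  (let S1 := [set x : R | l <= x < r /\ (rderiv h x <= m%:E)%E] in
   S1 !=set0 ->
   xExt l r h (inf S1) /\ (rderiv h (inf S1) <= m%:E)%E) /\
  (let S2 := [set x : R | l < x <= r /\ (m%:E <= lderiv h x)%E] in
   S2 !=set0 ->
   xExt l r h (sup S2) /\ (m%:E <= lderiv h (sup S2))%E).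
Proof.
move=> hw hc; split.
  apply: part1 hc => x lx xr.
  have lr : l < r by lra.
  have [hin hl _] := (continuous_within_itvP h lr).1 hw.
  move: lx; rewrite le_eqVlt => /orP[/eqP <-//|lx].
  apply: cvg_at_right_filter; apply: hin; by rewrite in_itv /= lx xr.
apply: part2 hc => x lx xr.
have lr : l < r by lra.
have [hin _ hr] := (continuous_within_itvP h lr).1 hw.
move: xr; rewrite le_eqVlt => /orP[/eqP ->//|xr].
apply: cvg_at_left_filter; apply: hin; by rewrite in_itv /= lx xr.
Qed.
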